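(* Let $A$ be a unital power-associative algebra over a field of characteristic zero and let $R$ be a Rota–Baxter operator of nonzero weight $\lambda$ on $A$. If $R(1)$ is nilpotent, then $R(1)=0$ and $R$ is splitting.
   Context: A linear operator $R\colon A\to A$ is a Rota–Baxter operator of weight $\lambda$ if $R(x)R(y)=R(R(x)y+xR(y)+\lambda xy)$ for all $x,y\in A$. An algebra is power-associative if every element generates an associative subalgebra. An RB-operator $R$ of weight $\lambda$ is splitting if $A=A_1\oplus A_2$ as vector spaces for subalgebras $A_1,A_2$ and $R(a_1+a_2)=-\lambda a_2$ for $a_1\in A_1$, $a_2\in A_2$. *)

(* Defs.v *)
(* Possibly non-associative algebras are modelled as a
   K-module V equipped with a bilinear product [mul]. *)
From HB Require Import structures.
From mathcomp Require Import all_boot all_order all_algebra.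
Set Implicit Arguments. Unset Strict Implicit. Unset Printing Implicit Defensive.
Import Order.TTheory GRing.Theory Num.Theory.
Local Open Scope ring_scope.

Section Defs.
Variables (K : fieldType) (V : lmodType K).

Definition bilinear_op (mul : V -> V -> V) : Prop :=
  (forall x, linear (mul x)) /\ (forall y, linear (fun x => mul x y)).

Definition unit_elem (mul : V -> V -> V) (e : V) : Prop :=
  forall x, mul e x = x /\ mul x e = x.

Definition is_subalgebra (mul : V -> V -> V) (P : V -> Prop) : Prop :=
  [/\ P 0,
      (forall (a : K) u v, P u -> P v -> P (a *: u + v)) &
      (forall u v, P u -> P v -> P (mul u v))].

Definition gen_subalg (mul : V -> V -> V) (x z : V) : Prop :=
  forall P, is_subalgebra mul P -> P x -> P z.

Definition power_associative (mul : V -> V -> V) : Prop :=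
  forall x a b c, gen_subalg mul x a -> gen_subalg mul x b -> gen_subalg mul x c ->
    mul (mul a b) c = mul a (mul b c).

Fixpoint npow (mul : V -> V -> V) (e x : V) (n : nat) : V :=
  match n with 0%N => e | n'.+1 => mul x (npow mul e x n') end.

Definition nilpotent_elem (mul : V -> V -> V) (e x : V) : Prop :=
  exists n : nat, npow mul e x n = 0.

Definition rota_baxter (mul : V -> V -> V) (lam : K) (R : V -> V) : Prop :=
  forall x y, mul (R x) (R y) = R (mul (R x) y + mul x (R y) + lam *: mul x y).

Definition splitting (mul : V -> V -> V) (lam : K) (R : V -> V) : Prop :=
  exists (A1 A2 : V -> Prop),
    [/\ is_subalgebra mul A1, is_subalgebra mul A2,
        (forall v, exists a1 a2, [/\ A1 a1, A2 a2 & v = a1 + a2]),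
        (forall v, A1 v -> A2 v -> v = 0) &
        (forall a1 a2, A1 a1 -> A2 a2 -> R (a1 + a2) = - lam *: a2)].
End Defs.

(* Main.v *)
Require Import Defs.
From HB Require Import structures.
From mathcomp Require Import all_boot all_order all_algebra zify.
Import Order.TTheory GRing.Theory Num.Theory.
Local Open Scope ring_scope.

Section Helpers.
Variables (K : fieldType) (V : lmodType K) (mul : V -> V -> V).
Hypothesis Hb : bilinear_op mul.

Lemma mulrL x a u v : mul x (a *: u + v) = a *: mul x u + mul x v.
Proof. by case: Hb => H _; apply: H. Qed.
Lemma mullL y a u v : mul (a *: u + v) y = a *: mul u y + mul v y.
Proof. by case: Hb => _ H; apply: (H y). Qed.
Lemma mulx0 x : mul x 0 = 0.
Proof.
have := mulrL x 1 0 0; rewrite !scale1r !addr0 => H.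
by apply: (addrI (mul x 0)); rewrite addr0 -H.
Qed.
Lemma mul0x x : mul 0 x = 0.
Proof.
have := mullL x 1 0 0; rewrite !scale1r !addr0 => H.
by apply: (addrI (mul 0 x)); rewrite addr0 -H.
Qed.
Lemma mulxD x u v : mul x (u + v) = mul x u + mul x v.
Proof. by have := mulrL x 1 u v; rewrite !scale1r. Qed.
Lemma mulxZ x a u : mul x (a *: u) = a *: mul x u.
Proof. by have := mulrL x a u 0; rewrite !addr0 mulx0 addr0. Qed.
Lemma mulDx x u v : mul (u + v) x = mul u x + mul v x.
Proof. by have := mullL x 1 u v; rewrite !scale1r. Qed.
Lemma mulZx x a u : mul (a *: u) x = a *: mul u x.
Proof. by have := mullL x a u 0; rewrite !addr0 mul0x addr0. Qed.

Lemma iter_lin (s : V) k a u v :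
  iter k (mul s) (a *: u + v) = a *: iter k (mul s) u + iter k (mul s) v.
Proof. by elim: k => //= k ->; rewrite mulxD mulxZ. Qed.
Lemma iter0 (s : V) k : iter k (mul s) 0 = 0.
Proof. by elim: k => //= k ->; rewrite mulx0. Qed.
End Helpers.

Theorem lemma3 (K : fieldType) (V : lmodType K) (mul : V -> V -> V) (e : V)
  (R : {linear V -> V}) (lam : K) :
  [pchar K] =i pred0 ->
  bilinear_op mul -> unit_elem mul e -> power_associative mul ->
  lam != 0 -> rota_baxter mul lam R ->
  nilpotent_elem mul e (R e) ->
  R e = 0 /\ splitting mul lam R.
Proof.
move=> _ Hb Hu _ Hl Hrb [M HM].
have mx0 := @mulx0 _ _ _ Hb; have m0x := @mul0x _ _ _ Hb.
have mxD := @mulxD _ _ _ Hb; have mxZ := @mulxZ _ _ _ Hb.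
have mDx := @mulDx _ _ _ Hb; have mZx := @mulZx _ _ _ Hb.
have it0 := @iter0 _ _ _ Hb; have itL := @iter_lin _ _ _ Hb.
have ue x : mul e x = x by case: (Hu x).
have eu x : mul x e = x by case: (Hu x).
set r := R e.
set s := r + lam *: e.
have mul_s v : mul s v = mul r v + lam *: v by rewrite mDx mZx ue.
have key n : exists z, R z = npow mul e r n.+1 /\ R z + lam *: z = npow mul e s n.+1.
  elim: n => [|n [z [Hz1 Hz2]]].
    exists e; split; first by rewrite /= eu.
    by rewrite /= eu.
  have Rz' : R (mul r z + R z + lam *: z) = mul r (R z) by rewrite /r (Hrb e z) !ue.
  exists (mul r z + R z + lam *: z); split; first by rewrite Rz' Hz1.
  rewrite Rz'; change (mul r (R z) + lam *: (mul r z + R z + lam *: z) = mul s (npow mul e s n.+1)); rewrite -Hz2.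
  rewrite mul_s mxD mxZ !scalerDr scalerA.
  by rewrite -!addrA; congr (_ + _); rewrite addrC -!addrA.
have rz n : (M <= n)%N -> npow mul e r n = 0.
  elim: n => [|n IH]; first by rewrite leqn0 => /eqP <-.
  rewrite leq_eqVlt => /orP [/eqP <- //|]; rewrite ltnS => /IH /= ->.
  exact: mx0.
have Rs n : (M < n)%N -> R (npow mul e s n) = 0.
  case: n => // n Hn; have [z [H1 H2]] := key n.
  rewrite rz in H1; last exact: ltnW Hn.
  move: H2; rewrite H1 add0r => <-; by rewrite linearZ /= H1 scaler0.
have iterSe k : iter k (mul s) e = npow mul e s k by elim: k => //= k ->.
pose f j k := R (iter k (mul s) (npow mul e r j)).
have fM j k : (M <= j)%N -> f j k = 0.
  by move=> Hj; rewrite /f rz // it0 linear0.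
have frec j k : lam *: f j k = f j k.+1 - f j.+1 k.
  rewrite /f -linearZ /= -linearB /=; congr (R _).
  rewrite -iterS iterSr mul_s.
  have := itL s k 1 (mul r (npow mul e r j)) (lam *: npow mul e r j).
  rewrite scale1r => ->.
  have := itL s k lam (npow mul e r j) 0.
  by rewrite it0 !addr0 => ->; rewrite scale1r addrC addKr.
have frow j k : (M < k)%N -> f j k = 0.
  elim: j k => [|j IH] k Hk; first by rewrite /f iterSe Rs.
  have := frec j k; rewrite IH // IH ?(ltnW (ltn_trans Hk _)) //; last first.
    by apply: ltn_trans Hk _.
  by rewrite scaler0 sub0r => /eqP; rewrite eq_sym oppr_eq0 => /eqP.
have fall d j k : ((M - j) + (M.+1 - k) <= d)%N -> f j k = 0.
  elim: d j k => [|d IH] j k Hd.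
    have: (M <= j)%N by move: Hd; rewrite leqn0 addn_eq0 subn_eq0 => /andP[].
    exact: fM.
  case: (leqP M j) => Hj; first exact: fM.
  case: (leqP M.+1 k) => Hk; first exact: frow.
  have : lam *: f j k = 0.
    rewrite frec IH ?IH ?subrr //.
      move: Hd; rewrite subnS -subn1 -!subnDA.
      by move: Hj Hk; clear; lia.
    move: Hd Hj Hk; clear; lia.
  by move/eqP; rewrite scaler_eq0 (negbTE Hl) /= => /eqP.
have Re0 : R e = 0.
  by have := fall (M + M.+1)%N 0%N 0%N (leq_add (leq_subr _ _) (leq_subr _ _)).
split => //.
have RR x : R (R x) = - lam *: R x.
  have := Hrb x e; rewrite Re0 mx0 mx0 addr0 eu linearD /= => /eqP.
  have := Hrb x e; rewrite Re0 !mx0 addr0 !eu linearD linearZ /= => /eqP.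
  by rewrite eq_sym addr_eq0 => /eqP ->; rewrite scaleNr.
exists (fun v => R v = 0), (fun v => exists w, v = R w); split.
- split; first exact: linear0.
    by move=> a u v Hu' Hv; rewrite linearD linearZ /= Hu' Hv scaler0 addr0.
  move=> u v Hu' Hv; have := Hrb u v; rewrite Hu' Hv m0x mx0 m0x.
  rewrite !add0r linearZ /= => /eqP; rewrite eq_sym scaler_eq0 (negbTE Hl) /=.
  by move/eqP.
- split; first by exists 0; rewrite linear0.
    by move=> a u v [w1 ->] [w2 ->]; exists (a *: w1 + w2); rewrite linearD linearZ.
  by move=> u v [w1 ->] [w2 ->]; exists (mul (R w1) w2 + mul w1 (R w2) + lam *: mul w1 w2).
- move=> v; exists (v + lam^-1 *: R v), (- (lam^-1 *: R v)); split.
  + rewrite linearD linearZ /= RR scalerA mulrN mulVf // scaleN1r subrr //.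
  + exists (- (lam^-1 *: v)); rewrite -scalerN -linearN -linearZ; congr (R _); exact: scalerN.
  + by rewrite addrK.
- move=> v Hv [w Hw]; have := RR w; rewrite -Hw Hv => /eqP.
  by rewrite eq_sym scaler_eq0 oppr_eq0 (negbTE Hl) /= => /eqP.
- move=> a1 a2 H1 [w ->]; by rewrite linearD /= H1 add0r RR.
Qed.
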